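(* Fix integers $N\ge 2$ and $K\ge 1$. The classes $M^{\text{ComplEx}}_{KN}$ and $M^{\text{HolE}}_{2KN+1}$ are universal, i.e. $\pi(\mathcal{M}^{\text{ComplEx}}_{KN})=\pi(\mathcal{M}^{\text{HolE}}_{2KN+1})=\pi(\mathbb{R}^{N\times N\times K})$.
   Context: There are $N$ entities and $K$ relations. A score-based model assigns a score $s_k(i,j)\in\mathbb{R}$ to each triple, $i,j\in\{1,\dots,N\}$, $k\in\{1,\dots,K\}$; its scoring tensor $\mathcal{S}\in\mathbb{R}^{N\times N\times K}$ has frontal slices $\mathbf{S}_k$ with $[\mathbf{S}_k]_{ij}=s_k(i,j)$. For a real $N\times N$ matrix $\mathbf{S}$, $\pi(\mathbf{S})$ is the matrix of dense ranks: $\pi_{ij}(\mathbf{S})=1+$ (number of distinct values among entries of $\mathbf{S}$ strictly larger than $s_{ij}$). For tensors, $\pi$ acts slicewise; for a set $X$, $\pi(X)=\{\pi(x):x\in X\}$. ComplEx of size $r$: parameters $\mathbf{A}\in\mathbb{C}^{N\times r}$ (rows $\mathbf{a}_i$), $\mathbf{R}\in\mathbb{C}^{K\times r}$ (rows $\mathbf{r}_k$), score $\mathrm{Re}(\mathbf{a}_i^T\mathrm{diag}(\mathbf{r}_k)\overline{\mathbf{a}_j})$. HolE of size $r$: parameters $\mathbf{A}\in\mathbb{R}^{N\times r}$, $\mathbf{R}\in\mathbb{R}^{K\times r}$, score $\mathbf{r}_k^T(\mathbf{a}_i\star\mathbf{a}_j)$ where $(\mathbf{a}\star\mathbf{b})_m=\sum_{t=1}^r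 a_t\, b_{((m+t-2)\bmod r)+1}$ is circular correlation. $\mathcal{M}^t_r$ is the set of scoring tensors of all models of type $t$ and size $r$. *)

(* Defs.v *)
From HB Require Import structures.
From mathcomp Require Import all_boot all_order all_algebra.
From mathcomp Require Import reals.
From mathcomp.real_closed Require Import complex.
Set Implicit Arguments. Unset Strict Implicit. Unset Printing Implicit Defensive.
Import Order.TTheory GRing.Theory Num.Theory.
Local Open Scope ring_scope.

(* A scoring tensor in R^{N x N x K}: frontal slices S k, with [S k] i j = s_k(i,j). *)
Definition tensor (R : Type) (N K : nat) := 'I_K -> 'M[R]_N.

Definition dense_rank (R : realType) (N : nat) (S : 'M[R]_N) (i j : 'I_N) : nat :=
  (size (undup [seq S p.1 p.2 | p <- enum {: 'I_N * 'I_N} & S i j < S p.1 p.2])).+1.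

(* pi acting slicewise on a tensor; result is a finite function (extensional). *)
Definition pi_tensor (R : realType) (N K : nat) (S : tensor R N K)
  : {ffun 'I_K -> 'M[nat]_N} :=
  [ffun k => \matrix_(i, j) dense_rank (S k) i j].

Definition complex_scores (R : realType) (N K r : nat)
  (A : 'M[R[i]]_(N, r)) (Rel : 'M[R[i]]_(K, r)) : tensor R N K :=
  fun k => \matrix_(i, j) @complex.Re R (\sum_(t < r) A i t * Rel k t * conjc (A j t)).

(* Circular correlation with 0-based indices: (a * b)_m = sum_t a_t b_{(m+t) mod r}
   (equivalent to the 1-based formula b_{((m+t-2) mod r)+1}). *)
Definition circ_corr (R : realType) (r : nat) (a b : 'rV[R]_r) (m : 'I_r) : R :=
  \sum_(t < r) a 0 t * b 0 (Ordinal (ltn_pmod (m + t) (leq_ltn_trans (leq0n m) (ltn_ord m)))).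

Definition hole_scores (R : realType) (N K r : nat)
  (A : 'M[R]_(N, r)) (Rel : 'M[R]_(K, r)) : tensor R N K :=
  fun k => \matrix_(i, j) \sum_(m < r) Rel k m * circ_corr (row i A) (row j A) m.

Definition complex_universal_size (R : realType) (N K r : nat) : Prop :=
  forall P : {ffun 'I_K -> 'M[nat]_N},
    (exists (A : 'M[R[i]]_(N, r)) (Rel : 'M[R[i]]_(K, r)),
        pi_tensor (complex_scores A Rel) = P) <->
    (exists S : tensor R N K, pi_tensor S = P).

Definition hole_universal_size (R : realType) (N K r : nat) : Prop :=
  forall P : {ffun 'I_K -> 'M[nat]_N},
    (exists (A : 'M[R]_(N, r)) (Rel : 'M[R]_(K, r)),
        pi_tensor (hole_scores A Rel) = P) <->
    (exists S : tensor R N K, pi_tensor S = P).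

(* Main.v *)
Require Import Defs.
From HB Require Import structures.
From mathcomp Require Import all_boot all_order all_algebra.
From mathcomp Require Import reals.
From mathcomp.real_closed Require Import complex.
From mathcomp Require Import all_fingroup all_solvable all_field.
From mathcomp Require Import ring zify.
Set Implicit Arguments. Unset Strict Implicit. Unset Printing Implicit Defensive.
Import Order.TTheory GRing.Theory Num.Theory.
Local Open Scope ring_scope.


Lemma quad_id (F : comRingType) (u a b c d : F) : u * u = -1 ->
  (a + u*b)*(c - u*d) = (b - u*a)*(d + u*c).
Proof.
move=> hi; apply/eqP; rewrite -subr_eq0.
have -> : (a + u*b)*(c - u*d) - (b - u*a)*(d + u*c) = (u*u+1)*(a*c - b*d) by ring.
by rewrite hi addNr mul0r.
Qed.

Section P1.
Variable R : realType.
Local Notation C := R[i].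
Local Notation cR := (real_complex R).

Definition Zmat N (X : 'M[R]_N) : 'M[C]_N :=
  \matrix_(i, j) (cR (X i j) + 'i * cR (X j i)).

Lemma conjcR (x : R) : Num.conj (cR x) = cR x.
Proof. exact: conjc_real. Qed.

Lemma Zmat_normal N (X : 'M[R]_N) : Zmat X \is normalmx.
Proof.
apply/normalmxP; apply/matrixP => i j; rewrite !mxE; apply: eq_bigr => l _.
rewrite !mxE !rmorphD !rmorphM /= !conjcR conjCi.
rewrite !mulNr quad_id //.
by rewrite -expr2 sqrCi.
Qed.


Lemma Zmat_decomp N (X : 'M[R]_N) (i j : 'I_N) :
  Zmat X i j = \sum_(n < N) Num.conj (spectralmx (Zmat X) n i) *
     spectral_diag (Zmat X) 0 n * spectralmx (Zmat X) n j.
Proof.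
have /orthomx_spectralP E := Zmat_normal X.
rewrite {1}E invmx_unitary ?spectral_unitarymx // mul_mx_diag mxE.
by apply: eq_bigr => n _; rewrite !mxE.
Qed.

Lemma Re_Zmat N (X : 'M[R]_N) (i j : 'I_N) : complex.Re (Zmat X i j) = X i j.
Proof. by rewrite mxE /= mul0r mul1r subrr addr0. Qed.

Lemma sum_mxvec (V : nmodType) m n (F : 'I_(m * n) -> V) :
  \sum_(t < m * n) F t = \sum_(a < m) \sum_(b < n) F (mxvec_index a b).
Proof.
rewrite (reindex (uncurry (@mxvec_index m n))) /=; last first.
  exact: curry_mxvec_bij.
by rewrite pair_big /=; apply: eq_bigr => -[a b].
Qed.

Lemma complex_full N K (S : tensor R N K) :
  exists (A : 'M[C]_(N, K * N)) (Rel : 'M[C]_(K, K * N)),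
    forall k, complex_scores A Rel k = S k.
Proof.
pose P k := spectralmx (Zmat (S k)); pose d k := spectral_diag (Zmat (S k)).
exists (\matrix_(i, t) mxvec (\matrix_(k, n) Num.conj (P k n i)) 0 t).
exists (\matrix_(k, t) mxvec (\matrix_(k', n) (if k' == k then d k 0 n else 0)) 0 t).
move=> k; apply/matrixP => i j; rewrite mxE -[RHS](Re_Zmat (S k) i j).
congr complex.Re; rewrite Zmat_decomp sum_mxvec (bigD1 k) //= [X in _ + X]big1 ?addr0.
  apply: eq_bigr => n _; rewrite !mxE !mxvecE !mxE eqxx.
  by rewrite (_ : conjc (Num.conj (P k n j)) = Num.conj (Num.conj (P k n j))) // conjCK.
move=> k' nk; apply: big1 => n _; rewrite !mxE !mxvecE !mxE (negbTE nk).
by rewrite mulr0 mul0r.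
Qed.

End P1.


Lemma prim_root_exists (C : numClosedFieldType) n : (n > 0)%N ->
  exists z : C, n.-primitive_root z.
Proof.
pose p : {poly C} := 'X^n - 1; have [r Dp] := closed_field_poly_normal p.
move=> n_gt0; rewrite (monicP _) ?monicXnsubC // scale1r in Dp.
have rn1: all n.-unity_root r by apply/allP=> z; rewrite -root_prod_XsubC -Dp.
have sz_r: (n < (size r).+1)%N.
  by rewrite -(size_prod_XsubC r id) -Dp size_XnsubC.
have [|z] := hasP (has_prim_root n_gt0 rn1 _ sz_r); last by exists z.
by rewrite -separable_prod_XsubC -Dp cyclotomic.separable_Xn_sub_1 // pnatr_eq0 -lt0n.
Qed.

Definition wt m (u : 'I_m * bool) : int := if u.2 then (u.1.+1)%:Z else - (u.1.+1)%:Z.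
Definition flip m (u : 'I_m * bool) : 'I_m * bool := (u.1, ~~ u.2).
Lemma wt_bound m (u v : 'I_m * bool) : `|wt u + wt v| < (2 * m + 1)%N%:Z.
Proof.
case: u v => [f []] [g []]; rewrite /wt /=; have := ltn_ord f; have := ltn_ord g; lia.
Qed.
Lemma wt_zero m (u v : 'I_m * bool) : (wt u + wt v == 0) = (u == flip v).
Proof.
case: u v => [f []] [g []]; rewrite /wt /flip /= xpair_eqE /=; rewrite ?andbT ?andbF;
 first [ lia | (apply/eqP/eqP; [ move=> h; apply: val_inj; rewrite /=; lia | by move=> -> ; lia ])].
Qed.

Section Roots.
Variable (C : numClosedFieldType) (r : nat) (w : C).
Hypothesis prim : r.-primitive_root w.

Let r_gt0 : (0 < r)%N. Proof. exact: prim_order_gt0 prim. Qed.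

Lemma w_neq0 : w != 0.
Proof.
apply/negP => /eqP w0; have := prim_expr_order prim.
rewrite w0 expr0n; case: r r_gt0 => // n _ /= /eqP; by rewrite eq_sym oner_eq0.
Qed.

Lemma E_add (a b : int) : w ^ (a + b) = w ^ a * w ^ b.
Proof. exact: expfzDr w_neq0. Qed.

Lemma E_rM (a : int) (q : int) : w ^ (a + q * r%:Z) = w ^ a.
Proof.
have h1 : w ^ r%:Z = 1 by rewrite -exprnP (prim_expr_order prim).
by rewrite E_add [q * _]mulrC -exprz_exp h1 exp1rz mulr1.
Qed.

Lemma norm_w : `|w| = 1.
Proof.
apply/eqP; rewrite -(pexpr_eq1 r_gt0) // -normrX prim_expr_order //.
by rewrite normr1.
Qed.

Lemma conj_E (a : int) : Num.conj (w ^ a) = w ^ (- a).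
Proof.
have wu : w \is a GRing.unit by rewrite unitfE w_neq0.
have hc : Num.conj w = w^-1.
  by apply: (mulfI w_neq0); rewrite divff ?w_neq0 // -normCK norm_w expr1n.
have -> : Num.conj (w ^ a) = (Num.conj w) ^ a by exact: rmorphXz.
by rewrite hc exprz_inv.
Qed.

Lemma E_one (a : int) : `|a| < r%:Z -> (w ^ a == 1) = (a == 0).
Proof.
case: a => n.
  rewrite -exprnP -(prim_order_dvd prim) /= => hn.
  case: n hn => [|n] hn; first by rewrite dvdn0.
  apply/negbTE; rewrite gtnNdvd //.
rewrite NegzE => hn; apply/negbTE.
rewrite -exprnN invr_eq1 -(prim_order_dvd prim) gtnNdvd //.
Qed.

Lemma sumE (a : int) : `|a| < r%:Z ->
  \sum_(t < r) w ^ (a * (t : nat)%:Z) = if a == 0 then r%:R else 0.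
Proof.
move=> ha; case: eqP => [-> | a0].
  by rewrite (eq_bigr (fun _ => 1)) ?sumr_const ?card_ord // => t _; rewrite mul0r expr0z.
have q1 : w ^ a != 1 by rewrite E_one // ; apply/eqP.
have : (w ^ a - 1) * \sum_(t < r) w ^ (a * (t : nat)%:Z) = 0.
  rewrite (eq_bigr (fun t : 'I_r => (w ^ a) ^+ t)); last first.
    by move=> t _; rewrite exprnP exprz_exp.
  rewrite -subrX1 exprnP exprz_exp.
  by rewrite -(add0r (a * r%:Z)) E_rM expr0z subrr.
by move/eqP; rewrite mulf_eq0 subr_eq0 (negbTE q1) /= => /eqP.
Qed.

Section Ortho.
Variable m : nat.
Hypothesis hr : r = (2 * m + 1)%N.
Local Notation U := ('I_m * bool)%type.

Lemma ortho2 (F G : U -> C) :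
  \sum_(t < r) (\sum_u F u * w ^ (wt u * (t : nat)%:Z)) *
                (\sum_v G v * w ^ (wt v * (t : nat)%:Z)) =
  r%:R * \sum_v F (flip v) * G v.
Proof.
have -> : \sum_(t < r) (\sum_u F u * w ^ (wt u * (t : nat)%:Z)) *
                (\sum_v G v * w ^ (wt v * (t : nat)%:Z)) =
  \sum_u \sum_v F u * G v * \sum_(t < r) w ^ ((wt u + wt v) * (t : nat)%:Z).
  rewrite (eq_bigr (fun t : 'I_r => \sum_u \sum_v F u * G v * w ^ ((wt u + wt v) * (t : nat)%:Z))); last first.
    move=> t _; rewrite mulr_suml; apply: eq_bigr => u _; rewrite mulr_sumr.
    by apply: eq_bigr => v _; rewrite mulrDl E_add; ring.
  rewrite exchange_big; apply: eq_bigr => u _; rewrite exchange_big.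
  by apply: eq_bigr => v _; rewrite mulr_sumr.
rewrite mulr_sumr exchange_big; apply: eq_bigr => v _.
rewrite (bigD1 (flip v)) //= [X in _ + X]big1 ?addr0; last first.
  move=> u nu; rewrite sumE; last by rewrite hr wt_bound.
  by rewrite wt_zero (negbTE nu) mulr0.
rewrite sumE; last by rewrite hr wt_bound.
by rewrite wt_zero eqxx mulrC.
Qed.

End Ortho.

End Roots.


Section Hole.
Variable R : realType.
Local Notation C := R[i].
Local Notation cR := (real_complex R).
Variables (r m : nat) (w : C).
Hypothesis prim : r.-primitive_root w.
Hypothesis hr : r = (2 * m + 1)%N.
Local Notation U := ('I_m * bool)%type.

Lemma cR_inj : injective cR.
Proof. by move=> x y [->]. Qed.

Definition realvec (c : 'I_m -> C) (n : nat) : R :=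
  \sum_(f < m) 2 * complex.Re (c f * w ^ (wt (f, true) * n%:Z)).

Definition cc (c : 'I_m -> C) (u : U) : C :=
  if u.2 then c u.1 else Num.conj (c u.1).

Lemma realvecE c n : cR (realvec c n) = \sum_u cc c u * w ^ (wt u * n%:Z).
Proof.
rewrite rmorph_sum -(pair_big xpredT xpredT (fun f s => cc c (f, s) * w ^ (wt (f, s) * n%:Z))) /=.
apply: eq_bigr => f _; rewrite big_bool /= rmorphM /= rmorph_nat -addcJ.
congr (_ + _); rewrite /cc /=.
rewrite (_ : conjc (c f * w ^ (wt (f, true) * n%:Z)) = Num.conj (c f * w ^ (wt (f, true) * n%:Z))) //.
by rewrite rmorphM /= (conj_E prim) /wt /= mulNr.
Qed.

Lemma realvec_mod c n : realvec c (n %% r) = realvec c n.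
Proof.
apply: cR_inj; rewrite !realvecE; apply: eq_bigr => u _; congr (_ * _).
rewrite {2}(divn_eq n r) PoszD PoszM mulrDr addrC mulrA.
by rewrite (E_rM prim).
Qed.

Lemma hole_from_complex N K (A' : 'M[C]_(N, m)) (B : 'M[C]_(K, m)) :
  exists (A : 'M[R]_(N, r)) (Rel : 'M[R]_(K, r)),
    forall k, hole_scores A Rel k = complex_scores A' B k.
Proof.
pose g k f := B k f / (2 * r ^ 2)%:R.
exists (\matrix_(i, t) realvec (fun f => A' i f) t).
exists (\matrix_(k, d) realvec (g k) d).
move=> k; apply/matrixP => i j; rewrite !mxE; apply: cR_inj.
rewrite rmorph_sum /=.
rewrite (eq_bigr (fun d : 'I_r => (\sum_u cc (g k) u * w ^ (wt u * (d : nat)%:Z)) *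
   (r%:R * \sum_v cc (fun f => A' i f) (flip v) * (cc (fun f => A' j f) v * w ^ (wt v * (d : nat)%:Z))))); last first.
  move=> d _; rewrite rmorphM /= mxE realvecE; congr (_ * _).
  rewrite /circ_corr rmorph_sum /= -(ortho2 prim hr).
  apply: eq_bigr => t _; rewrite !mxE rmorphM /= realvec_mod !realvecE; congr (_ * _).
  apply: eq_bigr => v _; rewrite PoszD mulrDr (E_add prim); ring.
rewrite (eq_bigr (fun d : 'I_r => r%:R * ((\sum_u cc (g k) u * w ^ (wt u * (d : nat)%:Z)) *
   (\sum_v (cc (fun f => A' i f) (flip v) * cc (fun f => A' j f) v) * w ^ (wt v * (d : nat)%:Z))))); last first.
  move=> d _; rewrite mulrCA; congr (_ * (_ * _)).
  by apply: eq_bigr => v _; rewrite mulrA.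
rewrite -mulr_sumr (ortho2 prim hr).
rewrite ReJ_add -(pair_big xpredT xpredT (fun f s => cc (g k) (flip (f, s)) * (cc [eta A' i] (flip (f, s)) * cc [eta A' j] (f, s)))) /=.
rewrite (_ : conjc (\sum_(t < m) A' i t * B k t * conjc (A' j t)) = Num.conj (\sum_(t < m) A' i t * B k t * Num.conj (A' j t))) //.
rewrite rmorph_sum -big_split mulr_suml !mulr_sumr; apply: eq_bigr => f _.
rewrite big_bool /cc /flip /g /= !rmorphM /= conjCK fmorphV /= rmorph_nat.
have -> : conjc (A' j f) = Num.conj (A' j f) by [].
have r0 : r%:R != 0 :> C by rewrite pnatr_eq0 hr addn1.
rewrite natrM natrX; field.
exact: r0.
Qed.

End Hole.

Theorem theorem7 (R : realType) (N K : nat) (hN : (2 <= N)%N) (hK : (1 <= K)%N) :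
  complex_universal_size R N K (K * N) /\ hole_universal_size R N K (2 * K * N + 1).
Proof.
split.
  move=> P; split => [[A [Rel <-]] | [S <-]]; first by exists (complex_scores A Rel).
  have [A [Rel H]] := complex_full S.
  by exists A, Rel; apply/ffunP => k; rewrite !ffunE H.
move=> P; split => [[A [Rel <-]] | [S <-]]; first by exists (hole_scores A Rel).
have [A' [B H]] := complex_full S.
have r0 : (0 < 2 * K * N + 1)%N by rewrite addn1.
have [w prim] := @prim_root_exists R[i] (2 * K * N + 1)%N r0.
have hr : (2 * K * N + 1)%N = (2 * (K * N) + 1)%N by rewrite mulnA.
have [A [Rel H2]] := hole_from_complex prim hr A' B.
by exists A, Rel; apply/ffunP => k; rewrite !ffunE H2 H.
Qed.
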